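(* Let $\Sigma$ be an alphabet, $L\subseteq\Sigma^*$ with $|L|\ge 2$, and $R:=\mathrm{lcs}(L)$. Fix any $xR\in L\setminus\{R\}$. Then there is some $yR\in L\setminus\{R\}$ such that $\mathrm{lcsext}(L)=\mathrm{lcs}(x^{\overleftarrow{\omega}},y^{\overleftarrow{\omega}})=\mathrm{lcs}(x^{\overleftarrow{\omega}},y^{\overleftarrow{\omega}},z^{\overleftarrow{\omega}})$ for all $zR\in L$. Moreover, if $xy=yx$, then $R\in L$.
   Context: Add a greatest element $\top$ to the words. For $w\in\Sigma^+$, $u\in\Sigma^*$, $w^{\overleftarrow{\omega}}u$ denotes the left-infinite (ultimately left-periodic) word $\cdots wwwu$; set $\varepsilon^{\overleftarrow{\omega}}:=\top$ and $\top w=w\top=\top$. The suffix order $u\preceq v$ means $u$ is a suffix of $v$, on finite words, ultimately left-periodic words and $\top$, with $\top$ the greatest element. $\mathrm{lcs}(L)$ (longest common suffix) is the infimum of $L$ w.r.t. this order ($\mathrm{lcs}(\emptyset)=\top$). For $L\subseteq\Sigma^*$ with $R=\mathrm{lcs}(L)$, the maximal suffix extension is $\mathrm{lcsext}(L):=\mathrm{lcs}(\{z^{\overleftarrow{\omega}}\mid zR\in L\})$. *)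

(* Defs.v *)
From mathcomp Require Import all_boot.
From Stdlib Require Import ClassicalEpsilon.
Set Implicit Arguments. Unset Strict Implicit. Unset Printing Implicit Defensive.

(* Generalized words over an alphabet T:
   - [Fin s]  : a finite word s (written left to right);
   - [Inf f]  : a left-infinite word ... f 2 f 1 f 0, i.e. [f i] is the i-th
                letter counted from the RIGHT end (i = 0 is the last letter);
   - [Top]    : the adjoined greatest element. *)
Inductive gword (T : Type) := Fin of seq T | Inf of (nat -> T) | Top.
Arguments Top {T}.

Section GWords.
Variable T : eqType.

Definition gle (u v : gword T) : Prop :=
  match u, v with
  | _, Top => True
  | Top, _ => False
  | Fin s, Fin t => suffix s t
  | Fin s, Inf f => s = rev (mkseq f (size s))
  | Inf _, Fin _ => False
  | Inf f, Inf g => f = g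
  end.

(* z^{<-omega} = ... z z z ; with eps^{<-omega} = Top. *)
Definition lpow (z : seq T) : gword T :=
  match z with
  | [::] => Top
  | a :: _ => Inf (fun i => nth a (rev z) (i %% size z))
  end.

Definition is_lcs (S : gword T -> Prop) (w : gword T) : Prop :=
  (forall v, S v -> gle w v) /\
  (forall u, (forall v, S v -> gle u v) -> gle u w).

Definition lcs (S : gword T -> Prop) : gword T :=
  epsilon (inhabits Top) (is_lcs S).

Definition lcs_lang (L : seq T -> Prop) : gword T :=
  lcs (fun v => exists w, L w /\ v = Fin w).

Definition lcsext (L : seq T -> Prop) : gword T :=
  lcs (fun v => exists z, (exists R, lcs_lang L = Fin R /\ L (z ++ R))
                          /\ v = lpow z).

End GWords.

(* Main.v *)
Require Import Defs.
From mathcomp Require Import all_boot.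
From mathcomp Require Import zify.
From Stdlib Require Import Classical ClassicalEpsilon FunctionalExtensionality.
Set Implicit Arguments. Unset Strict Implicit. Unset Printing Implicit Defensive.

Section Aux.
Variable T : eqType.
Implicit Types (S : gword T -> Prop) (u v w : gword T) (s t : seq T).

Definition lowerb S u := forall v, S v -> gle u v.

Lemma gle_refl v : gle v v.
Proof. by case: v => //= s; exact: suffix_refl. Qed.

Lemma gle_anti u v : gle u v -> gle v u -> u = v.
Proof.
case: u => [s|f|]; case: v => [t|g|] //=.
- move=> h1 h2; have /suffixP[a ea] := h1; have := size_suffix h2.
  rewrite ea size_cat; case: a ea => // c a _; rewrite /= ltnNge leq_addl //.
- by move=> ->.
Qed.

Lemma lcs_eq S w : is_lcs S w -> lcs S = w.
Proof.
move=> hw; rewrite /lcs.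
have := epsilon_spec (inhabits Top) (is_lcs S) (ex_intro _ w hw).
set e := epsilon _ _ => [[h1 h2]].
apply: gle_anti; [exact: hw.2 _ h1 | exact: h2 _ hw.1].
Qed.

Lemma suf_cmp s1 s2 t : suffix s1 t -> suffix s2 t -> size s1 <= size s2 ->
  suffix s1 s2.
Proof.
rewrite !suffixE => /eqP e1 /eqP e2 le12.
have hs2 : size s2 <= size t by rewrite -e2 size_drop leq_subr.
apply/eqP; set n1 := size s1 in e1 le12 *; set n2 := size s2 in e2 hs2 le12 *.
rewrite -e1 -e2 drop_drop; congr drop; lia.
Qed.

Lemma mk_cmp (f : nat -> T) n1 n2 : n1 <= n2 ->
  suffix (rev (mkseq f n1)) (rev (mkseq f n2)).
Proof.
move=> le; rewrite suffix_rev prefixE size_mkseq /mkseq -map_take take_iota.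
by rewrite (minn_idPl le).
Qed.

Lemma gle_cmp s1 s2 v : v <> Top -> gle (Fin s1) v -> gle (Fin s2) v ->
  size s1 <= size s2 -> suffix s1 s2.
Proof.
case: v => [t|f|] //= _.
- by move=> h1 h2 h; exact: suf_cmp h1 h2 h.
- by move=> h1 h2 h; rewrite h1 h2; apply: mk_cmp.
Qed.

Lemma max_exists (P : nat -> Prop) N : P 0 -> (forall k, P k -> k <= N) ->
  exists k, P k /\ forall k', P k' -> k' <= k.
Proof.
move=> P0 hN.
pose Pb k := if excluded_middle_informative (P k) then true else false.
have PbP k : Pb k <-> P k by rewrite /Pb; case: excluded_middle_informative.
have ex : exists i, Pb i by exists 0; apply/PbP.
have ub : forall i, Pb i -> i <= N by move=> i /PbP; apply: hN.
case: (ex_maxnP ex ub) => i /PbP Pi hi; exists i; split=> // k /PbP; exact: hi.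
Qed.

Lemma min_exists (P : nat -> Prop) n : P n ->
  exists k, P k /\ forall k', P k' -> k <= k'.
Proof.
move=> Pn.
pose Pb k := if excluded_middle_informative (P k) then true else false.
have PbP k : Pb k <-> P k by rewrite /Pb; case: excluded_middle_informative.
have ex : exists i, Pb i by exists n; apply/PbP.
case: (ex_minnP ex) => i /PbP Pi hi; exists i; split=> // k /PbP; exact: hi.
Qed.

Lemma lcs_exists S : exists w, is_lcs S w.
Proof.
case: (classic (exists v, S v /\ lowerb S v)) => [[v [Sv lv]]|nA].
  by exists v; split=> // u lu; exact: lu v Sv.
case: (classic (exists v, S v /\ v <> Top)) => [[v0 [Sv0 v0T]]|nB]; last first.
  exists Top; split=> [v Sv|u _]; last by case: u.
  by case: v Sv => // [s|f] Sv; case: nB; eexists; split; eauto.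
have lowFin : forall u, lowerb S u -> exists s, u = Fin s.
  move=> [s|g|] lu; first by exists s.
  - have := lu _ Sv0; case: v0 Sv0 v0T => //= g' Sv0 _ eg; subst g'.
    by case: nA; exists (Inf g).
  - by have := lu _ Sv0; case: v0 Sv0 v0T.
have bnd : exists N, forall s, lowerb S (Fin s) -> size s <= N.
  case: v0 Sv0 v0T nA => [t|f|] // Sv0 _ nA.
    by exists (size t) => s ls; apply: size_suffix; exact: ls _ Sv0.
  apply: NNPP => nb; case: nA; exists (Inf f); split=> // v Sv.
  have big : forall N, exists s, lowerb S (Fin s) /\ N < size s.
    move=> N; apply: NNPP => hn; case: nb; exists N => s ls.
    by rewrite leqNgt; apply/negP => lt; case: hn; exists s.
  case: v Sv => [t|g|] //= Sv.
    have [s [ls lt]] := big (size t); have := size_suffix (ls _ Sv).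
    by rewrite leqNgt lt.
  apply: functional_extensionality => i.
  have [s [ls lt]] := big i.
  have e1 : s = rev (mkseq f (size s)) := ls _ Sv0.
  have e2 : s = rev (mkseq g (size s)) := ls _ Sv.
  have : mkseq f (size s) = mkseq g (size s) by rewrite -[mkseq f _]revK -[mkseq g _]revK -e1 -e2.
  by move/(congr1 (fun l => nth (f i) l i)); rewrite !nth_mkseq.
have [N hN] := bnd.
have P0 : (fun k => exists s, size s = k /\ lowerb S (Fin s)) 0.
  exists [::]; split=> // v _; case: v => //= t; exact: suffix0s.
have [k [[s [<- ls]] hk]] := max_exists P0 (fun k '(ex_intro s (conj e ls)) =>
   eq_ind _ (fun k => k <= N) (hN s ls) _ e).
exists (Fin s); split=> // u lu.
have [s' es'] := lowFin u lu; subst u.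
apply: gle_cmp v0T (lu _ Sv0) (ls _ Sv0) _.
by apply: hk; exists s'.
Qed.

Lemma lcs_spec S : is_lcs S (lcs S).
Proof. by have [w hw] := lcs_exists S; rewrite (lcs_eq hw). Qed.

End Aux.
Section Aux2.
Variable T : eqType.
Implicit Types (s t a b c x y z : seq T).

Lemma lpowE z d : z <> [::] ->
  lpow z = Inf (fun i => nth d (rev z) (i %% size z)).
Proof.
case: z => // a z _ /=; congr Inf; apply: functional_extensionality => i.
apply: set_nth_default; rewrite size_rev; apply: ltn_pmod => //.
Qed.

Lemma lpow_top z : lpow z = Top -> z = [::].
Proof. by case: z. Qed.

Lemma lpow_inf z g : lpow z = Inf g -> z = rev (mkseq g (size z)).
Proof.
case: z => // a z' e; rewrite (lpowE a) // in e; case: e => <-.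
set z := a :: z'.
have -> : mkseq (fun i => nth a (rev z) (i %% size z)) (size z) = rev z.
  apply: (@eq_from_nth _ a); rewrite size_mkseq ?size_rev // => i lt.
  by rewrite nth_mkseq // modn_small.
by rewrite revK.
Qed.

Lemma lpow_ex z : z <> [::] -> exists g, lpow z = Inf g.
Proof. by case: z => // a z _; eexists. Qed.

Lemma flat_rcons k s : flatten (nseq k.+1 s) = flatten (nseq k s) ++ s.
Proof.
elim: k => [|k IH]; first by rewrite /= cats0.
change (s ++ flatten (nseq k.+1 s) = flatten (nseq k.+1 s) ++ s).
by rewrite {1}IH catA.
Qed.

Lemma rev_flat k s : rev (flatten (nseq k s)) = flatten (nseq k (rev s)).
Proof.
elim: k => [|k IH] //; rewrite flat_rcons rev_cat IH.
by change (rev s ++ flatten (nseq k (rev s)) = flatten (nseq k.+1 (rev s))).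
Qed.

Lemma size_flat k s : size (flatten (nseq k s)) = k * size s.
Proof. by elim: k => [|k IH] //=; rewrite size_cat IH mulSn. Qed.

Lemma nth_flat d k s j : j < k * size s ->
  nth d (flatten (nseq k s)) j = nth d s (j %% size s).
Proof.
elim: k j => [|k IH] j //=; rewrite mulSn => lt.
rewrite nth_cat; case: ltnP => hj; first by rewrite modn_small.
rewrite IH; last by rewrite ltn_subLR.
by rewrite -(modnDr (j - size s)) subnK.
Qed.

Lemma per_pow d k c i : 0 < k -> c <> [::] ->
  nth d (rev (flatten (nseq k c))) (i %% size (flatten (nseq k c)))
  = nth d (rev c) (i %% size c).
Proof.
move=> k0 c0; have sc : 0 < size c by case: c c0.
rewrite rev_flat size_flat nth_flat; last first.
  by rewrite size_rev ltn_pmod // muln_gt0 k0.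
rewrite size_rev; congr nth; apply/eqP; rewrite modn_dvdm //.
exact: dvdn_mull.
Qed.

Lemma comm_pow n a b : size a + size b <= n -> a ++ b = b ++ a ->
  exists c k l, a = flatten (nseq k c) /\ b = flatten (nseq l c).
Proof.
elim: n a b => [|n IH] a b.
  by case: a; case: b => // _ _; exists [::], 0, 0.
wlog le : a b / size a <= size b.
  move=> H hs e; case: (leqP (size a) (size b)) => h; first exact: H.
  have hs' : size b + size a <= n.+1 by rewrite addnC.
  have [c [k [l [e1 e2]]]] := H b a (ltnW h) hs' (esym e).
  by exists c, l, k.
move=> hs e; case: a le hs e => [|a0 a'] le hs e.
  by exists b, 0, 1; rewrite /= cats0.
set a := a0 :: a' in le hs e *.
have [b' eb] : exists b', b = a ++ b'.
  exists (drop (size a) b).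
  have := congr1 (take (size a)) e; rewrite take_size_cat // takel_cat //.
  by move=> ea; rewrite -{1}(cat_take_drop (size a) b) -ea.
have e' : a ++ b' = b' ++ a.
  have e2 : a ++ (a ++ b') = a ++ (b' ++ a) by rewrite -eb e eb -catA.
  by move: (congr1 (drop (size a)) e2); rewrite !drop_size_cat.
have hs' : size a + size b' <= n by move: hs; rewrite eb size_cat /=; lia.
have [c [k [l [e1 e2]]]] := IH a b' hs' e'.
exists c, k, (k + l); split=> //.
by rewrite eb e1 e2 nseqD flatten_cat.
Qed.

Lemma comm_lpow x y : x ++ y = y ++ x -> x <> [::] -> y <> [::] ->
  lpow x = lpow y.
Proof.
move=> e x0 y0.
have [c [k [l [e1 e2]]]] := comm_pow (leqnn _) e.
case: x x0 e e1 => // d x' _ e e1.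
rewrite !(lpowE d) //; congr Inf; apply: functional_extensionality => i.
have c0 : c <> [::] by move=> c0; rewrite c0 in e1; case: k e1 => // k; elim: k.
have k0 : 0 < k by case: k e1.
have l0 : 0 < l by case: l e2 y0 => // ->.
by rewrite e1 e2 !per_pow.
Qed.

End Aux2.

Theorem lemma4 (T : finType) (L : seq T -> Prop) (R x : seq T) :
  (exists a b, L a /\ L b /\ a <> b) ->
  lcs_lang L = Fin R ->
  L (x ++ R) -> x ++ R <> R ->
  exists y : seq T,
    L (y ++ R) /\ y ++ R <> R /\
    lcsext L = lcs (fun v => v = lpow x \/ v = lpow y) /\
    (forall z : seq T, L (z ++ R) ->
       lcsext L = lcs (fun v => v = lpow x \/ v = lpow y \/ v = lpow z)) /\
    (x ++ y = y ++ x -> L R).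
Proof.
move=> _ hR hx xR.
have x0 : x <> [::] by move=> e; apply: xR; rewrite e.
pose LS := (fun v : gword T => exists w, L w /\ v = Fin w).
have hLS : is_lcs LS (Fin R) by rewrite -hR; exact: lcs_spec.
pose S0 := (fun v : gword T => exists z, (exists R', lcs_lang L = Fin R' /\ L (z ++ R')) /\ v = lpow z).
have inZ : forall z, L (z ++ R) -> S0 (lpow z).
  by move=> z h; exists z; split=> //; exists R.
have fromZ : forall v, S0 v -> exists z, L (z ++ R) /\ v = lpow z.
  move=> v [z [[R' [e h]] ->]]; exists z; split=> //.
  by rewrite hR in e; case: e => ->.
have [M [eM hM]] : exists M, lcsext L = M /\ is_lcs S0 M.
  by exists (lcsext L); split=> //; exact: lcs_spec.
rewrite eM.
have [fx efx] := lpow_ex x0.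
have Mx : gle M (Inf fx) by rewrite -efx; apply: hM.1; apply: inZ.
case: (classic (M = Inf fx)) => [e1|n1].
  exists x; split=> //; split=> //; split; last split.
  - symmetry; apply: lcs_eq; split; [move=> v [->|->] | move=> u hu]; try by rewrite efx -e1; apply: gle_refl.
    by rewrite e1 -efx; apply: hu; left.
  - move=> z hz; symmetry; apply: lcs_eq; split; [move=> v [->|[->|->]] | move=> u hu].
    + by rewrite efx -e1; apply: gle_refl.
    + by rewrite efx -e1; apply: gle_refl.
    + exact: hM.1 _ (inZ z hz).
    + by rewrite e1 -efx; apply: hu; left.
  - move=> _; apply: NNPP => nLR.
    have allz : forall z, L (z ++ R) -> z <> [::] -> z = rev (mkseq fx (size z)).
      move=> z hz z0; have [g eg] := lpow_ex z0.
      have := hM.1 _ (inZ z hz); rewrite eg e1 /= => efg; subst g.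
      exact: lpow_inf eg.
    have Px : (fun k => exists z, size z = k /\ z <> [::] /\ L (z ++ R)) (size x).
      by exists x.
    have [k [[z0 [sz [z00 hz0]]] hk]] := @min_exists (fun k => exists z, size z = k /\ z <> [::] /\ L (z ++ R)) _ Px.
    have low : lowerb LS (Fin (z0 ++ R)).
      move=> v [w [Lw ->]] /=.
      have /suffixP[z ez] : suffix R w by exact: (hLS.1 _ (ex_intro _ w (conj Lw erefl))).
      subst w.
      have zn : z <> [::] by move=> e; apply: nLR; rewrite e in Lw.
      rewrite suffix_catl // eqxx /=.
      apply: (@gle_cmp _ _ _ (Inf fx)) => //=.
      + exact: allz.
      + exact: allz.
      + by rewrite sz; apply: hk; exists z.
    have := size_suffix (hLS.2 _ low); rewrite size_cat.
    by case: z0 z00 {sz hz0 low allz hk} => // a z0' _ /=; lia.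
have [m em] : exists m, M = Fin m.
  by case: M eM hM Mx n1 => [m|g|] //= _ _ eg; [exists m | rewrite eg].
rewrite em in hM Mx *; rewrite /= in Mx.
set n := size m in Mx.
have nl : ~ lowerb S0 (Fin (rev (mkseq fx n.+1))).
  move=> l; have := size_suffix (hM.2 _ l).
  by rewrite size_rev size_mkseq -/n ltnn.
have [v [Sv nv]] : exists v, S0 v /\ ~ gle (Fin (rev (mkseq fx n.+1))) v.
  apply: NNPP => h; apply: nl => v Sv; apply: NNPP => hv; apply: h; exists v; by split.
have [y [hy ev]] := fromZ v Sv; subst v.
have y0 : y <> [::] by move=> y0; apply: nv; rewrite y0 /=.
have [fy efy] := lpow_ex y0.
have my : m = rev (mkseq fy n) by have := hM.1 _ (inZ y hy); rewrite efy.
have exy : mkseq fx n = mkseq fy n.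
  by rewrite -[mkseq fx n]revK -[mkseq fy n]revK -Mx -my.
have neq : fx n <> fy n.
  by move=> e; apply: nv; rewrite efy /= size_rev size_mkseq !mkseqS exy e.
have G : forall u, gle u (lpow x) -> gle u (lpow y) -> gle u (Fin m).
  rewrite efx efy; case=> [s|g|] //= h1 h2.
  - have sn : size s <= n.
      rewrite leqNgt; apply/negP => lt; apply: neq.
      have : mkseq fx (size s) = mkseq fy (size s).
        by rewrite -[mkseq fx _]revK -[mkseq fy _]revK -h1 -h2.
      by move/(congr1 (fun l => nth (fx n) l n)); rewrite !nth_mkseq.
    apply: (@gle_cmp _ _ _ (Inf fx)) => //=.
  - by case: neq; rewrite -h1 -h2.
exists y; split=> //; split; last split; last split.
- move/(congr1 size); rewrite size_cat; clear -y0; case: y y0 => // a y' _ /=; lia.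
- symmetry; apply: lcs_eq; split; [move=> v [->|->] | move=> u hu].
  + exact: hM.1 _ (inZ x hx).
  + exact: hM.1 _ (inZ y hy).
  + by apply: G; apply: hu; [left|right].
- move=> z hz; symmetry; apply: lcs_eq; split; [move=> v [->|[->|->]] | move=> u hu].
  + exact: hM.1 _ (inZ x hx).
  + exact: hM.1 _ (inZ y hy).
  + exact: hM.1 _ (inZ z hz).
  + by apply: G; apply: hu; [left|right; left].
- move=> e; case: neq; have := comm_lpow e x0 y0; rewrite efx efy; by case=> ->.
Qed.
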